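(* For $n\ge2$ agents with identical additive valuations, every online algorithm that in each round $t$ outputs a contiguous EF1 allocation of $M_t$ requires $\Omega(nT)$ adjustments in the worst case (for $T$ sufficiently large compared with $n$).
   Context: Items $g_1,\dots,g_T$ arrive online on a line; $M_t=\{g_1,\dots,g_t\}$. A contiguous allocation of $M_t$ assigns agent $i$ the $i$-th block from the left. EF1: for all $i,j$, $A_j=\emptyset$ or some $g\in A_j$ has $v(A_i)\ge v(A_j\setminus\{g\})$. The number of adjustments is $\sum_{t=1}^{T-1}|\{g\in M_t: g \text{ is assigned to different agents in } A^t \text{ and } A^{t+1}\}|$. *)

(* Defs.v *)
From HB Require Import structures.
From mathcomp Require Import all_boot all_order all_algebra.
Set Implicit Arguments. Unset Strict Implicit. Unset Printing Implicit Defensive.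
Import Order.TTheory GRing.Theory Num.Theory.
Local Open Scope ring_scope.

(* Items g_1..g_t are represented by positions 0..t-1 of a sequence [s] of
   their (common, additive, nonnegative) values.  An allocation of M_t is a
   map [A : nat -> nat] sending item position j < t to its agent in 0..n-1. *)

Section Defs.
Variable R : realFieldType.

Definition bundle_val (s : seq R) (A : nat -> nat) (i : nat) : R :=
  \sum_(j < size s | A j == i) s`_j.

(* contiguous allocation: agent i gets the i-th block from the left
   (blocks may be empty), i.e. the assignment is monotone in the position *)
Definition contiguous_alloc (n : nat) (s : seq R) (A : nat -> nat) : Prop :=
  (forall j, (j < size s)%N -> (A j < n)%N) /\
  (forall j1 j2, (j1 <= j2)%N -> (j2 < size s)%N -> (A j1 <= A j2)%N).

Definition EF1 (n : nat) (s : seq R) (A : nat -> nat) : Prop :=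
  forall i k, (i < n)%N -> (k < n)%N ->
    (forall j, (j < size s)%N -> A j <> k) \/
    (exists2 g, (g < size s)%N /\ A g = k &
       bundle_val s A k - s`_g <= bundle_val s A i).

(* A deterministic online algorithm: after round t it has seen the values of
   g_1..g_t (the prefix [s], of size t) and outputs an allocation of M_t.
   Being a function of the prefix only makes it online. *)
Definition online_alg := seq R -> nat -> nat.

Definition valid_contig_EF1_alg (n : nat) (alg : online_alg) : Prop :=
  forall s : seq R, all (fun x => 0 <= x) s ->
    contiguous_alloc n s (alg s) /\ EF1 n s (alg s).

Definition adjustments (alg : online_alg) (v : seq R) : nat :=
  \sum_(1 <= t < size v)
     count (fun j => alg (take t v) j != alg (take t.+1 v) j) (iota 0 t).

End Defs.

(* Main.v *)
Require Import Defs.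
From HB Require Import structures.
From mathcomp Require Import all_boot all_order all_algebra.
From mathcomp Require Import zify.
Import Order.TTheory GRing.Theory Num.Theory.

Lemma count_iota_mono (p : pred nat) m m' : m <= m' ->
  count p (iota 0 m) <= count p (iota 0 m').
Proof. by move=> H; rewrite -(subnKC H) iotaD count_cat leq_addr. Qed.

Lemma count_all_iota (p : pred nat) a k :
  (forall j, a <= j < a + k -> p j) -> count p (iota a k) = k.
Proof.
move=> H; apply/eqP; rewrite -[X in _ == X](size_iota a k) -all_count.
by apply/allP => j; rewrite mem_iota => /H.
Qed.

Lemma count_lt_sum (A : nat -> nat) N i :
  count (fun j => A j < i) (iota 0 N) =
  \sum_(i' < i) count (fun j => A j == i') (iota 0 N).
Proof.
elim: i => [|i IH].
  rewrite big_ord0; transitivity (count pred0 (iota 0 N)); last exact: count_pred0.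
  by apply: eq_count => j; rewrite ltn0.
rewrite big_ord_recr /= -IH.
have -> : count (fun j => A j < i.+1) (iota 0 N) =
  count (predU (fun j => A j < i) (fun j => A j == i)) (iota 0 N).
  by apply: eq_count => j; rewrite /= ltnS leq_eqVlt orbC.
rewrite -count_predUI.
have -> : count (predI (fun j => A j < i) (fun j => A j == i)) (iota 0 N) = 0.
  transitivity (count pred0 (iota 0 N)); last exact: count_pred0.
  apply: eq_count => j /=.
  by case: ltngtP.
by rewrite addn0.
Qed.

Lemma prefix_count (p : pred nat) N j :
  (forall j1 j2, j1 <= j2 -> j2 < N -> p j2 -> p j1) -> j < N ->
  p j = (j < count p (iota 0 N)).
Proof.
move=> Hd HjN; case Hp: (p j); apply/esym.
- apply: (@leq_trans (count p (iota 0 j.+1))); last exact: count_iota_mono.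
  rewrite count_all_iota // => j' /andP [_ Hj'].
  rewrite add0n ltnS in Hj'; exact: (Hd j' j Hj' HjN Hp).
- apply/negbTE; rewrite -leqNgt.
  rewrite -(subnKC (ltnW HjN)) iotaD count_cat add0n.
  have -> : count p (iota j (N - j)) = 0.
    apply/eqP; rewrite -leqn0 leqNgt -has_count; apply/hasP => [[j' Hj' Hpj']].
    move: Hj'; rewrite mem_iota => /andP [H1 H2].
    have HjN' : j' < N by rewrite (subnKC (ltnW HjN)) in H2.
    by move: (Hd j j' H1 HjN' Hpj'); rewrite Hp.
  by rewrite addn0 -[X in _ <= X](size_iota 0 j) count_size.
Qed.

Lemma all_eq n q (c : nat -> nat) : \sum_(i < n) c i = q * n ->
  (forall i k, i < n -> k < n -> c k = 0 \/ c k <= c i + 1) ->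
  forall i, i < n -> c i = q.
Proof.
move=> Hs Hp.
have Hle : forall k, k < n -> c k <= q.
  move=> k Hk; rewrite leqNgt; apply/negP => Hq.
  have Hall : forall i, i < n -> q <= c i.
    move=> i Hi; case: (Hp i k Hi Hk) => H; first by rewrite H in Hq.
    by move: Hq H; lia.
  have : \sum_(i < n) q < \sum_(i < n) c i.
    rewrite (bigD1 (Ordinal Hk)) //= [X in _ < X](bigD1 (Ordinal Hk)) //=.
    rewrite -addSn leq_add //; apply: leq_sum => i _; exact: Hall.
  by rewrite Hs sum_nat_const card_ord mulnC ltnn.
move=> i Hi; apply/eqP; rewrite eqn_leq Hle //=; rewrite leqNgt; apply/negP => Hq.
have : \sum_(i < n) c i < \sum_(i < n) q.
  rewrite (bigD1 (Ordinal Hi)) //= [X in _ < X](bigD1 (Ordinal Hi)) //=.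
  rewrite -addSn leq_add //; apply: leq_sum => k _; exact: Hle.
by rewrite Hs sum_nat_const card_ord mulnC ltnn.
Qed.

Lemma bundle_val_ones (R : realFieldType) N (A : nat -> nat) i :
  bundle_val (nseq N (1%R : R)) A i = (count (fun j => A j == i) (iota 0 N))%:R%R.
Proof.
have -> : iota 0 N = index_iota 0 N by rewrite /index_iota subn0.
rewrite /bundle_val size_nseq -sum1_count natr_sum big_mkord.
by apply: eq_bigr => j _; rewrite nth_nseq ltn_ord.
Qed.

Lemma forced (R : realFieldType) n q (A : nat -> nat) : 0 < n ->
  contiguous_alloc n (nseq (q * n) (1%R : R)) A ->
  EF1 n (nseq (q * n) (1%R : R)) A ->
  forall i j, i <= n -> j < q * n -> (A j < i) = (j < i * q).
Proof.
move=> n0 [Hr Hm] Hef i j Hi Hj.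
pose c k := count (fun j => A j == k) (iota 0 (q * n)).
have Hsum : \sum_(k < n) c k = q * n.
  rewrite -count_lt_sum count_all_iota // => j' /andP [_ Hj'].
  by apply: Hr; rewrite size_nseq.
have Hp : forall i k, i < n -> k < n -> c k = 0 \/ c k <= c i + 1.
  move=> i' k Hi' Hk; case: (Hef i' k Hi' Hk) => [H|[g [Hg HAg] Hle]].
    left; apply/eqP; rewrite -leqn0 leqNgt -has_count; apply/hasP => [[j' Hj' /eqP HA]].
    by move: Hj'; rewrite mem_iota add0n => /andP [_ Hj']; apply: (H j'); rewrite ?size_nseq.
  right; move: Hle; rewrite size_nseq in Hg; rewrite !bundle_val_ones nth_nseq Hg.
  by rewrite lerBlDr natr1 ler_nat addn1.
have Hc := @all_eq n q c Hsum Hp.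
have HP : count (fun j => A j < i) (iota 0 (q * n)) = i * q.
  rewrite count_lt_sum (eq_bigr (fun _ => q)); first by rewrite sum_nat_const card_ord.
  move=> k _; apply: Hc; exact: leq_trans (ltn_ord k) Hi.
rewrite -HP; apply: (@prefix_count (fun j => A j < i) (q * n) j) => // j1 j2 H12 Hj2 /= H.
apply: leq_ltn_trans H; apply: Hm => //; by rewrite size_nseq.
Qed.

Lemma tele (f : nat -> nat -> nat) t1 m d : m <= t1 ->
  count (fun j => f t1 j != f (t1 + d) j) (iota 0 m) <=
  \sum_(t1 <= t < t1 + d) count (fun j => f t j != f t.+1 j) (iota 0 t).
Proof.
move=> Hm; elim: d => [|d IH].
  rewrite addn0 big_geq // leqn0; apply/eqP.
  transitivity (count pred0 (iota 0 m)); last exact: count_pred0.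
  by apply: eq_count => j; rewrite /= eqxx.
rewrite addnS big_nat_recr /= ?leq_addr //.
set g := (fun j => f (t1 + d) j != f (t1 + d).+1 j).
have H2 := count_iota_mono g _ _ (leq_trans Hm (leq_addr d t1)).
apply: leq_trans (leq_add IH H2).
rewrite -count_predUI; apply: leq_trans (leq_addr _ _).
apply: sub_count => j /=; apply: contraR => /norP [/negPn/eqP -> /negPn/eqP ->].
by [].
Qed.

Lemma block (R : realFieldType) n (alg : online_alg R) q : 2 <= n -> n <= q ->
  valid_contig_EF1_alg n alg ->
  \sum_(i < n) i <= count (fun j => alg (nseq (q * n) 1%R) j !=
                                    alg (nseq (q.+1 * n) 1%R) j) (iota 0 (q * n)).
Proof.
move=> n2 nq Hv.
have n0 : 0 < n by apply: leq_trans n2.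
have all1 : forall t, all (fun x : R => (0 <= x)%R) (nseq t 1%R).
  by move=> t; apply/allP => x /nseqP [-> _]; exact: ler01.
have [HA1 HA2] := Hv _ (all1 (q * n)).
have [HB1 HB2] := Hv _ (all1 (q.+1 * n)).
have FA := forced _ _ _ _ n0 HA1 HA2.
have FB := forced _ _ _ _ n0 HB1 HB2.
set bad := (fun j => _ != _).
suff : forall k, k <= n -> \sum_(i < k) i <= count bad (iota 0 (k * q)).
  by move=> /(_ n (leqnn n)); rewrite mulnC.
elim => [|k IH] Hk; first by rewrite big_ord0.
rewrite big_ord_recr /= mulSnr iotaD count_cat add0n.
apply: leq_add; first by apply: IH; apply: ltnW.
have Hkq : k <= q by apply: leq_trans (ltnW Hk) nq.
have -> : iota (k * q) q = iota (k * q) k ++ iota (k * q + k) (q - k)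
  by rewrite -iotaD subnKC.
rewrite count_cat count_all_iota ?leq_addr // => j /andP [H1 H2].
have HjA : j < q * n by nia.
have HjB : j < q.+1 * n by nia.
have eA := FA k j (ltnW Hk) HjA.
have eB := FB k j (ltnW Hk) HjB.
have e1 : (j < k * q) = false by apply/negbTE; rewrite -leqNgt.
have e2 : (j < k * q.+1) = true by rewrite mulnS addnC.
rewrite e1 in eA; rewrite e2 in eB.
rewrite /bad; apply/eqP => E; by rewrite E eB in eA.
Qed.

Lemma sum_ord_id n : (\sum_(i < n) i) * 2 = n * (n - 1).
Proof.
elim: n => [|n IH]; first by rewrite big_ord0.
rewrite big_ord_recr /= mulnDl IH; case: n {IH} => [|m] //.
rewrite !subSS !subn0; nia.
Qed.
Lemma a1 n e : 2 <= n -> n + 1 <= e -> (n + e) * n + n <= 4 * e * (n - 1).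
Proof. move=> h1 h2. nia. Qed.
Lemma arith n T Q K A : 2 <= n -> 2 * n + 1 <= Q -> T < Q * n + n ->
  K * 2 = n * (n - 1) -> (Q - n) * K <= A -> n * T <= 8 * A.
Proof.
move=> n2 HQ HT HK HA.
have HnQ : n <= Q by lia.
set e := Q - n.
have HQe : Q = n + e by rewrite /e subnKC.
have He : n + 1 <= e by lia.
apply: (@leq_trans (n * (Q * n + n))); first by rewrite leq_mul2l ltnW ?orbT.
apply: (@leq_trans (4 * e * (n * (n - 1)))).
  by rewrite mulnCA leq_mul2l HQe a1 ?orbT.
rewrite -HK.
have -> : 4 * e * (K * 2) = 8 * (e * K) by rewrite !mulnA [_ * 2]mulnC !mulnA; congr (_ * _).
by rewrite leq_mul2l HA orbT.
Qed.

Lemma main_nat :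
  exists d : nat, (0 < d)%N /\
  forall (R : realFieldType) (n : nat), (2 <= n)%N ->
  exists T0 : nat, forall T : nat, (T0 <= T)%N ->
  forall alg : online_alg R, valid_contig_EF1_alg n alg ->
  exists v : seq R, [/\ size v = T, all (fun x => (0 <= x)%R) v &
     (n * T <= d * adjustments alg v)%N].
Proof.
exists 8; split => // R n n2; exists (n * (2 * n + 1)) => T HT alg Hv.
have n0 : 0 < n by apply: leq_trans n2.
exists (nseq T 1%R); split; first by rewrite size_nseq.
  by apply/allP => x /nseqP [-> _]; exact: ler01.
set Q := T %/ n.
have HQ : 2 * n + 1 <= Q by rewrite /Q leq_divRL // mulnC.
have HQT : Q * n <= T by rewrite /Q leq_trunc_div.
have HTQ : T < Q * n + n.
  by rewrite {1}(divn_eq T n) ltn_add2l ltn_pmod.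
set f := fun t => alg (take t (nseq T 1%R)).
set F := fun t => count (fun j => f t j != f t.+1 j) (iota 0 t).
have Hadj : adjustments alg (nseq T 1%R) = \sum_(1 <= t < T) F t
  by rewrite /adjustments size_nseq.
set K := \sum_(i < n) i.
have Hstep : forall d, n + d <= Q -> d * K <= \sum_(n * n <= t < (n + d) * n) F t.
  elim => [|d IH] Hd; first by rewrite mul0n.
  rewrite (big_cat_nat _ (n := (n + d) * n)) /=; last 2 first.
  - by rewrite leq_mul2r leq_addr orbT.
  - by rewrite leq_mul2r addnS leqnSn orbT.
  rewrite mulSn addnC; apply: leq_add; first by apply: IH; apply: ltnW; rewrite -addnS.
  have -> : (n + d.+1) * n = (n + d) * n + n by rewrite addnS mulSnr.
  apply: leq_trans (tele f ((n + d) * n) ((n + d) * n) n (leqnn _)).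
  have Ht1 : (n + d) * n <= T by apply: leq_trans HQT; rewrite leq_mul2r; apply/orP; right; apply: ltnW; rewrite -addnS.
  have Ht2 : (n + d) * n + n <= T by apply: leq_trans HQT; rewrite -mulSnr leq_mul2r -addnS Hd orbT.
  rewrite /f !take_nseq // -mulSnr.
  by apply: block => //; rewrite leq_addr.
apply: (arith _ _ _ _ _ n2 HQ HTQ (sum_ord_id n)).
rewrite Hadj.
have HnQ : n <= Q by apply: leq_trans HQ; rewrite -addnA leq_addr.
have := Hstep (Q - n); rewrite subnKC // => /(_ (leqnn _)) H.
apply: leq_trans H _.
have Hnn : n * n <= Q * n by rewrite leq_mul2r HnQ orbT.
rewrite [X in _ <= X](big_cat_nat _ (n := n * n)) /=; last 2 first.
- by rewrite muln_gt0 n0.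
- exact: leq_trans Hnn HQT.
apply: leq_trans (leq_addl _ _).
rewrite [X in _ <= X](big_cat_nat _ (n := Q * n)) //=.
exact: leq_addr.
Qed.

Local Open Scope ring_scope.

Theorem mainTheorem10 :
  exists d : nat, (0 < d)%N /\
  forall (R : realFieldType) (n : nat), (2 <= n)%N ->
  exists T0 : nat, forall T : nat, (T0 <= T)%N ->
  forall alg : online_alg R, valid_contig_EF1_alg n alg ->
  exists v : seq R, [/\ size v = T, all (fun x => 0 <= x) v &
     (n * T <= d * adjustments alg v)%N].
Proof. exact: main_nat. Qed.
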